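(* Let $\rho_1,\rho_2$ be two rank-two density operators on $\mathbb{C}^2\otimes\mathbb{C}^2$ with orthogonal supports. Then the following are equivalent: (a) $\rho_1,\rho_2$ can be perfectly distinguished by a separable POVM; (b) $\rho_1,\rho_2$ can be perfectly distinguished by LOCC; (c) the orthogonal projectors onto the supports of $\rho_1$ and of $\rho_2$ are both separable.
   Context: A positive semidefinite operator on $\mathbb{C}^2\otimes\mathbb{C}^2$ is separable if it is a nonnegative linear combination of product projectors $|a\rangle\langle a|\otimes|b\rangle\langle b|$; a POVM is separable if all its elements are separable. LOCC means measurements implementable by local operations on each qubit and classical communication between the two parties. A POVM $\{\Pi_1,\Pi_2\}$ perfectly distinguishes $\rho_1,\rho_2$ if $\mathrm{tr}(\Pi_i\rho_j)=\delta_{ij}$. *)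

(* Defs.v *)
(* Complex scalars: an arbitrary numClosedFieldType C
   (algebraically closed field with conjugation and partial order,
   e.g. algC). *)
From HB Require Import structures.
From mathcomp Require Import all_boot all_order all_algebra.
Set Implicit Arguments. Unset Strict Implicit. Unset Printing Implicit Defensive.
Import Order.TTheory GRing.Theory Num.Theory.
Local Open Scope ring_scope.

Section QDefs.
Variable C : numClosedFieldType.

Definition adj (m n : nat) (A : 'M[C]_(m, n)) : 'M[C]_(n, m) :=
  (map_mx Num.conj A)^T.

(* Kronecker (tensor) product; C^m1 (x) C^m2 ~ C^(m1*m2) via mxvec_index *)
Definition kron (m1 n1 m2 n2 : nat) (A : 'M[C]_(m1, n1)) (B : 'M[C]_(m2, n2))
  : 'M[C]_(m1 * m2, n1 * n2) :=
  \sum_(i1 < m1) \sum_(j1 < n1) \sum_(i2 < m2) \sum_(j2 < n2)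
     (A i1 j1 * B i2 j2) *: delta_mx (mxvec_index i1 i2) (mxvec_index j1 j2).

Definition psd (n : nat) (A : 'M[C]_n) : Prop :=
  adj A = A /\ forall v : 'cV[C]_n, 0 <= (adj v *m A *m v) 0 0.

Definition density (n : nat) (rho : 'M[C]_n) : Prop :=
  psd rho /\ \tr rho = 1.

(* supports (ranges) of A and B are orthogonal: <Au, Bv> = 0 for all u, v *)
Definition orth_supports (n : nat) (A B : 'M[C]_n) : Prop :=
  adj A *m B = 0.

(* P is the orthogonal projector onto the support (column space) of rho *)
Definition supp_proj (n : nat) (P rho : 'M[C]_n) : Prop :=
  adj P = P /\ P *m P = P /\ (P^T == rho^T)%MS.

Definition ketbra (n : nat) (a : 'cV[C]_n) : 'M[C]_n := a *m adj a.

Definition unit_vec (n : nat) (a : 'cV[C]_n) : Prop := adj a *m a = 1%:M.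

Definition separable (A : 'M[C]_(2 * 2)) : Prop :=
  exists (k : nat) (c : 'I_k -> C) (a b : 'I_k -> 'cV[C]_2),
    (forall i, 0 <= c i) /\ (forall i, unit_vec (a i)) /\
    (forall i, unit_vec (b i)) /\
    A = \sum_(i < k) c i *: kron (ketbra (a i)) (ketbra (b i)).

Definition perfectly_distinguishes (n : nat) (Pi1 Pi2 rho1 rho2 : 'M[C]_n)
  : Prop :=
  \tr (Pi1 *m rho1) = 1 /\ \tr (Pi1 *m rho2) = 0 /\
  \tr (Pi2 *m rho1) = 0 /\ \tr (Pi2 *m rho2) = 1.

Definition separable_POVM (Pi1 Pi2 : 'M[C]_(2 * 2)) : Prop :=
  separable Pi1 /\ separable Pi2 /\ Pi1 + Pi2 = 1%:M.

(* The current local dimensions of Alice's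
   and Bob's systems are da and db (they may change, e.g. via ancillas).
   At each node one party applies a local instrument with finitely many
   outcomes, given by Kraus operators K j : C^da -> C^(d j); the outcome is
   broadcast and the protocol continues depending on it.  A leaf announces
   the final outcome (false = "rho1", true = "rho2"). *)
Inductive LOCC : nat -> nat -> Type :=
| Leaf (da db : nat) (o : bool) : LOCC da db
| AliceStep (da db k : nat) (d : 'I_k -> nat)
    (K : forall j : 'I_k, 'M[C]_(d j, da))
    (next : forall j : 'I_k, LOCC (d j) db) : LOCC da db
| BobStep (da db k : nat) (d : 'I_k -> nat)
    (K : forall j : 'I_k, 'M[C]_(d j, db))
    (next : forall j : 'I_k, LOCC da (d j)) : LOCC da db.

Fixpoint LOCC_wf (da db : nat) (p : LOCC da db) : Prop :=
  match p with
  | Leaf _ _ _ => True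
  | AliceStep da db k d K next =>
      \sum_(j < k) adj (K j) *m K j = 1%:M /\ forall j, LOCC_wf (next j)
  | BobStep da db k d K next =>
      \sum_(j < k) adj (K j) *m K j = 1%:M /\ forall j, LOCC_wf (next j)
  end.

(* POVM element of outcome o implemented by protocol p *)
Fixpoint LOCC_effect (o : bool) (da db : nat) (p : LOCC da db)
  : 'M[C]_(da * db) :=
  match p in LOCC da db return 'M[C]_(da * db) with
  | Leaf da db o' => if o' == o then 1%:M else 0
  | AliceStep da db k d K next =>
      \sum_(j < k) adj (kron (K j) (1%:M : 'M[C]_db))
                     *m LOCC_effect o (next j) *m kron (K j) (1%:M : 'M[C]_db)
  | BobStep da db k d K next =>
      \sum_(j < k) adj (kron (1%:M : 'M[C]_da) (K j))
                     *m LOCC_effect o (next j) *m kron (1%:M : 'M[C]_da) (K j)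
  end.

End QDefs.

(* Main.v *)
Require Import Defs.
From HB Require Import structures.
From mathcomp Require Import all_boot all_order all_algebra.
From mathcomp Require Import ring.
Import Order.TTheory GRing.Theory Num.Theory.
Local Open Scope ring_scope.

Set Implicit Arguments. Unset Strict Implicit. Unset Printing Implicit Defensive.


Section Basics.
Variable C : numClosedFieldType.

Lemma dagE m n (A : 'M[C]_(m, n)) i j : adj A i j = (A j i)^*.
Proof. by rewrite /adj !mxE. Qed.

Lemma dagK m n (A : 'M[C]_(m, n)) : adj (adj A) = A.
Proof. by apply/matrixP => i j; rewrite !dagE conjCK. Qed.

Lemma dagM m n p (A : 'M[C]_(m, n)) (B : 'M[C]_(n, p)) :
  adj (A *m B) = adj B *m adj A.
Proof.
apply/matrixP => i j; rewrite dagE !mxE rmorph_sum; apply: eq_bigr => k _.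
by rewrite !dagE rmorphM mulrC.
Qed.

Lemma dagD m n (A B : 'M[C]_(m, n)) : adj (A + B) = adj A + adj B.
Proof. by apply/matrixP => i j; rewrite !(dagE, mxE) rmorphD. Qed.

Lemma dagN m n (A : 'M[C]_(m, n)) : adj (- A) = - adj A.
Proof. by apply/matrixP => i j; rewrite !(dagE, mxE) rmorphN. Qed.

Lemma dagB m n (A B : 'M[C]_(m, n)) : adj (A - B) = adj A - adj B.
Proof. by rewrite dagD dagN. Qed.

Lemma dagZ m n c (A : 'M[C]_(m, n)) : adj (c *: A) = c^* *: adj A.
Proof. by apply/matrixP => i j; rewrite !(dagE, mxE) rmorphM. Qed.

Lemma dag0 m n : adj (0 : 'M[C]_(m, n)) = 0.
Proof. by apply/matrixP => i j; rewrite !(dagE, mxE) rmorph0. Qed.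

Lemma dag1 n : adj (1%:M : 'M[C]_n) = 1%:M.
Proof.
apply/matrixP => i j; rewrite !(dagE, mxE) eq_sym.
by case: (i == j); rewrite /= ?rmorph1 ?rmorph0.
Qed.

Lemma dag_sum m n I (r : seq I) (P : pred I) (F : I -> 'M[C]_(m, n)) :
  adj (\sum_(i <- r | P i) F i) = \sum_(i <- r | P i) adj (F i).
Proof. by apply: (big_morph _ (@dagD m n) (@dag0 m n)). Qed.

Lemma mxvec_index_eq m n (i i' : 'I_m) (j j' : 'I_n) :
  (mxvec_index i j == mxvec_index i' j') = (i == i') && (j == j').
Proof.
have [g gK _] := curry_mxvec_bij m n.
apply/eqP/andP => [E | [/eqP -> /eqP ->] //].
have := congr1 g E.
have e1 := gK (i, j) isT; have e2 := gK (i', j') isT.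
rewrite /= in e1 e2; rewrite e1 e2 => -[-> ->]; by split.
Qed.

Lemma sum_mxvec m n (F : 'I_(m * n) -> C) :
  \sum_(k < m * n) F k = \sum_(i < m) \sum_(j < n) F (mxvec_index i j).
Proof.
rewrite pair_bigA /=.
rewrite (reindex (uncurry (@mxvec_index m n))) //=.
  by apply: eq_bigr => -[i j].
have [g g1 g2] := curry_mxvec_bij m n.
by exists g => x _; [apply: g1 | apply: g2].
Qed.

Lemma mx_mxvec_eq m1 m2 n1 n2 (A B : 'M[C]_(m1 * m2, n1 * n2)) :
  (forall i1 i2 j1 j2, A (mxvec_index i1 i2) (mxvec_index j1 j2)
                     = B (mxvec_index i1 i2) (mxvec_index j1 j2)) -> A = B.
Proof.
move=> H; apply/matrixP => k l.
by case/mxvec_indexP: k => i1 i2; case/mxvec_indexP: l => j1 j2.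
Qed.

Lemma sum_delta n (F : 'I_n -> C) i0 :
  (forall i, i != i0 -> F i = 0) -> \sum_i F i = F i0.
Proof. by move=> H; rewrite (bigD1 i0) //= big1 ?addr0. Qed.

Lemma neq_sym (T : eqType) (x y : T) : x != y -> y != x.
Proof. by rewrite eq_sym. Qed.

Lemma kronE m1 n1 m2 n2 (A : 'M[C]_(m1, n1)) (B : 'M[C]_(m2, n2)) i1 i2 j1 j2 :
  kron A B (mxvec_index i1 i2) (mxvec_index j1 j2) = A i1 j1 * B i2 j2.
Proof.
rewrite /kron summxE (sum_delta (i0 := i1)) => [|k1 nk1].
  rewrite summxE (sum_delta (i0 := j1)) => [|k2 nk2].
    rewrite summxE (sum_delta (i0 := i2)) => [|k3 nk3].
      rewrite summxE (sum_delta (i0 := j2)) => [|k4 nk4].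
        by rewrite !mxE !eqxx /= mulr1.
      by rewrite !mxE !mxvec_index_eq (negbTE (neq_sym nk4)) /= ?andbF ?andFb mulr0.
    rewrite summxE big1 // => k4 _.
    by rewrite !mxE !mxvec_index_eq (negbTE (neq_sym nk3)) /= ?andbF ?andFb mulr0.
  rewrite summxE big1 // => k3 _; rewrite summxE big1 // => k4 _.
  by rewrite !mxE !mxvec_index_eq (negbTE (neq_sym nk2)) /= ?andbF ?andFb mulr0.
rewrite summxE big1 // => k2 _; rewrite summxE big1 // => k3 _.
rewrite summxE big1 // => k4 _.
by rewrite !mxE !mxvec_index_eq (negbTE (neq_sym nk1)) /= ?andbF ?andFb mulr0.
Qed.

Lemma kron_mul m1 n1 p1 m2 n2 p2 (A : 'M[C]_(m1, n1)) (B : 'M[C]_(m2, n2))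
  (A' : 'M[C]_(n1, p1)) (B' : 'M[C]_(n2, p2)) :
  kron A B *m kron A' B' = kron (A *m A') (B *m B').
Proof.
apply: mx_mxvec_eq => i1 i2 j1 j2.
rewrite mxE sum_mxvec kronE !mxE big_distrlr /=.
apply: eq_bigr => k1 _; apply: eq_bigr => k2 _.
by rewrite !kronE mulrACA.
Qed.

Lemma kron_adj m1 n1 m2 n2 (A : 'M[C]_(m1, n1)) (B : 'M[C]_(m2, n2)) :
  adj (kron A B) = kron (adj A) (adj B).
Proof.
apply: mx_mxvec_eq => i1 i2 j1 j2.
by rewrite dagE !kronE !dagE rmorphM.
Qed.

Lemma kronDl m1 n1 m2 n2 (A A' : 'M[C]_(m1, n1)) (B : 'M[C]_(m2, n2)) :
  kron (A + A') B = kron A B + kron A' B.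
Proof.
apply: mx_mxvec_eq => i1 i2 j1 j2.
by rewrite mxE !kronE mxE mulrDl.
Qed.

Lemma kronDr m1 n1 m2 n2 (A : 'M[C]_(m1, n1)) (B B' : 'M[C]_(m2, n2)) :
  kron A (B + B') = kron A B + kron A B'.
Proof.
apply: mx_mxvec_eq => i1 i2 j1 j2.
by rewrite mxE !kronE mxE mulrDr.
Qed.

Lemma kronZl m1 n1 m2 n2 c (A : 'M[C]_(m1, n1)) (B : 'M[C]_(m2, n2)) :
  kron (c *: A) B = c *: kron A B.
Proof.
apply: mx_mxvec_eq => i1 i2 j1 j2.
by rewrite mxE !kronE mxE mulrA.
Qed.

Lemma kronZr m1 n1 m2 n2 c (A : 'M[C]_(m1, n1)) (B : 'M[C]_(m2, n2)) :
  kron A (c *: B) = c *: kron A B.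
Proof.
apply: mx_mxvec_eq => i1 i2 j1 j2.
by rewrite mxE !kronE mxE mulrCA.
Qed.

Lemma kron0l m1 n1 m2 n2 (B : 'M[C]_(m2, n2)) :
  kron (0 : 'M[C]_(m1, n1)) B = 0.
Proof.
apply: mx_mxvec_eq => i1 i2 j1 j2.
by rewrite mxE !kronE mxE mul0r.
Qed.

Lemma kron0r m1 n1 m2 n2 (A : 'M[C]_(m1, n1)) :
  kron A (0 : 'M[C]_(m2, n2)) = 0.
Proof.
apply: mx_mxvec_eq => i1 i2 j1 j2.
by rewrite mxE !kronE mxE mulr0.
Qed.

Lemma kronNl m1 n1 m2 n2 (A : 'M[C]_(m1, n1)) (B : 'M[C]_(m2, n2)) :
  kron (- A) B = - kron A B.
Proof. by rewrite -scaleN1r kronZl scaleN1r. Qed.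

Lemma kronBl m1 n1 m2 n2 (A A' : 'M[C]_(m1, n1)) (B : 'M[C]_(m2, n2)) :
  kron (A - A') B = kron A B - kron A' B.
Proof. by rewrite kronDl kronNl. Qed.

Lemma kronBr m1 n1 m2 n2 (A : 'M[C]_(m1, n1)) (B B' : 'M[C]_(m2, n2)) :
  kron A (B - B') = kron A B - kron A B'.
Proof. by rewrite kronDr -scaleN1r kronZr scaleN1r. Qed.

Lemma kron_suml m1 n1 m2 n2 I (r : seq I) (P : pred I)
  (F : I -> 'M[C]_(m1, n1)) (B : 'M[C]_(m2, n2)) :
  kron (\sum_(i <- r | P i) F i) B = \sum_(i <- r | P i) kron (F i) B.
Proof.
apply: (big_morph (fun A => kron A B)) => [A A'|]; first exact: kronDl.
exact: kron0l.
Qed.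

Lemma kron_sumr m1 n1 m2 n2 I (r : seq I) (P : pred I)
  (A : 'M[C]_(m1, n1)) (F : I -> 'M[C]_(m2, n2)) :
  kron A (\sum_(i <- r | P i) F i) = \sum_(i <- r | P i) kron A (F i).
Proof.
apply: (big_morph (fun B => kron A B)) => [B B'|]; first exact: kronDr.
exact: kron0r.
Qed.

Lemma kron11 m n : kron (1%:M : 'M[C]_m) (1%:M : 'M[C]_n) = 1%:M.
Proof.
apply: mx_mxvec_eq => i1 i2 j1 j2.
by rewrite kronE !mxE mxvec_index_eq; case: (i1 == j1); case: (i2 == j2);
  rewrite /= ?mulr1 ?mulr0 ?mul0r.
Qed.

Lemma mxtrace_kron m n (A : 'M[C]_m) (B : 'M[C]_n) :
  \tr (kron A B) = \tr A * \tr B.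
Proof.
rewrite /mxtrace sum_mxvec big_distrlr /=.
by apply: eq_bigr => i _; apply: eq_bigr => j _; rewrite kronE.
Qed.

End Basics.


Section Vec.
Variable C : numClosedFieldType.

Definition form n (A : 'M[C]_n) (x y : 'cV[C]_n) : C := (adj x *m A *m y) 0 0.

Lemma dag11 (M : 'M[C]_1) : adj M 0 0 = (M 0 0)^*.
Proof. by rewrite dagE. Qed.

Lemma formC n (A : 'M[C]_n) x y : adj A = A -> form A y x = (form A x y)^*.
Proof.
move=> hA; rewrite /form -dag11 !dagM hA dagK mulmxA //.
Qed.

Lemma form_expand n (A : 'M[C]_n) v w c :
  form A (v - c *: w) (v - c *: w) =
  form A v v - c * form A v w - c^* * form A w v + c * c^* * form A w w.
Proof.
rewrite /form dagB dagZ !mulmxBl !mulmxBr -!scalemxAl -!scalemxAr.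
rewrite !mxE; ring.
Qed.


Lemma form_delta n (A : 'M[C]_n) v i :
  form A (delta_mx i 0) v = (A *m v) i 0.
Proof.
rewrite /form -mulmxA mxE (bigD1 i) //= big1 ?addr0.
  by rewrite dagE mxE !eqxx /= rmorph1 mul1r.
by move=> k nk; rewrite dagE mxE (negbTE nk) /= rmorph0 mul0r.
Qed.

Lemma psd_kernel n (A : 'M[C]_n) v :
  adj A = A -> (forall u, 0 <= form A u u) -> form A v v = 0 -> A *m v = 0.
Proof.
move=> hA hpos h0.
suff hz : forall w, form A w v = 0.
  by apply/matrixP => i j; rewrite (ord1 j) -form_delta hz mxE.
move=> w; set z := form A w v; set a := form A w w.
have ha : 0 <= a by apply: hpos.
set s := (1 + a)^-1.
have h1a : 0 < 1 + a by rewrite ltr_wpDr.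
have hs : 0 < s by rewrite invr_gt0.
have hsc : s^* = s by rewrite geC0_conj // ltW.
have hsa : s * a <= 1.
  by rewrite mulrC ler_pdivrMr // mul1r lerDr.
have h2 : 0 < 2 - s * a.
  by rewrite subr_gt0 (le_lt_trans hsa) // ltr1n.
have := hpos (v - (s * z) *: w).
rewrite form_expand h0 (formC _ _ hA) -/z -/a.
have -> : 0 - s * z * z^* - (s * z)^* * z + s * z * (s * z)^* * a =
          - (s * (z * z^*)) * (2 - s * a).
  by rewrite !rmorphM /= hsc; ring.
rewrite mulNr oppr_ge0 pmulr_lle0 // pmulr_rle0 // => hle.
have : z * z^* = 0 by apply/eqP; rewrite eq_le hle mul_conjC_ge0.
by move/eqP; rewrite mul_conjC_eq0 => /eqP.
Qed.

End Vec.


Section Sep.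
Variable C : numClosedFieldType.

Definition dot n (u v : 'cV[C]_n) : C := (adj u *m v) 0 0.

Lemma dotE n (u v : 'cV[C]_n) : dot u v = \sum_i (u i 0)^* * v i 0.
Proof. by rewrite /dot mxE; apply: eq_bigr => i _; rewrite dagE. Qed.

Lemma dot_ge0 n (u : 'cV[C]_n) : 0 <= dot u u.
Proof. by rewrite dotE sumr_ge0 // => i _; rewrite mulrC mul_conjC_ge0. Qed.

Lemma dot_eq0 n (u : 'cV[C]_n) : dot u u = 0 -> u = 0.
Proof.
rewrite dotE => h; apply/matrixP => i j; rewrite (ord1 j) mxE.
have := @psumr_eq0P _ _ predT (fun i => (u i 0)^* * u i 0).
move=> /(_ (fun k _ => ltac:(by rewrite mulrC mul_conjC_ge0)) h i isT).
by move/eqP; rewrite mulrC mul_conjC_eq0 => /eqP.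
Qed.

Lemma dotC n (u v : 'cV[C]_n) : dot v u = (dot u v)^*.
Proof. by rewrite /dot -dag11 dagM dagK. Qed.

Lemma mx11_scalar' (M : 'M[C]_1) : M = (M 0 0)%:M.
Proof. by apply/matrixP => i j; rewrite (ord1 i) (ord1 j) mxE eqxx mulr1n. Qed.

Lemma ketbraZ n r (a : 'cV[C]_n) : ketbra (r *: a) = (r * r^*) *: ketbra a.
Proof. by rewrite /ketbra dagZ -scalemxAl -scalemxAr scalerA. Qed.

Lemma dag_ketbra n (a : 'cV[C]_n) : adj (ketbra a) = ketbra a.
Proof. by rewrite /ketbra dagM dagK. Qed.

Definition sepl m n (P : 'M[C]_(m * n)) :=
  exists s : seq ('cV[C]_m * 'cV[C]_n),
    P = \sum_(x <- s) kron (ketbra x.1) (ketbra x.2).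

Lemma separable_sepl (P : 'M[C]_(2 * 2)) : separable P -> sepl P.
Proof.
move=> [k [c [a [b [hc [_ [_ ->]]]]]]].
exists [seq (sqrtC (c i) *: a i, b i) | i <- enum 'I_k].
rewrite big_map big_enum /=; apply: eq_bigr => i _.
rewrite ketbraZ kronZl; congr (_ *: _).
by rewrite geC0_conj ?sqrtC_ge0 // -expr2 sqrtCK.
Qed.

Definition nrmz (a : 'cV[C]_2) : 'cV[C]_2 :=
  if a == 0 then delta_mx 0 0 else (sqrtC (dot a a))^-1 *: a.

Lemma nrmz_unit (a : 'cV[C]_2) : unit_vec (nrmz a).
Proof.
rewrite /unit_vec /nrmz; case: eqP => [_|/eqP a0].
  apply/matrixP => i j; rewrite (ord1 i) (ord1 j) !mxE (bigD1 0) //= big1.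
    by rewrite dagE !mxE /= rmorph1 mulr1 addr0.
  by move=> k nk; rewrite dagE !mxE (negbTE nk) /= rmorph0 mul0r.
rewrite dagZ -scalemxAl -scalemxAr scalerA.
rewrite [adj a *m a]mx11_scalar' -/(dot a a).
set r := sqrtC (dot a a).
have hr : 0 <= r by rewrite sqrtC_ge0 dot_ge0.
have r0 : r != 0.
  by rewrite sqrtC_eq0; apply/eqP => /dot_eq0 /eqP; rewrite (negbTE a0).
rewrite geC0_conj ?invr_ge0 // -(sqrtCK (dot a a)) -/r.
by rewrite scale_scalar_mx; congr (_%:M); field.
Qed.

Lemma ketbra_nrmz (a : 'cV[C]_2) : ketbra a = dot a a *: ketbra (nrmz a).
Proof.
rewrite /nrmz; case: eqP => [->|/eqP a0].
  by rewrite /ketbra dag0 mulmx0 /dot dag0 mul0mx mxE scale0r.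
rewrite ketbraZ scalerA.
set r := sqrtC (dot a a).
have hr : 0 <= r by rewrite sqrtC_ge0 dot_ge0.
have r0 : r != 0.
  by rewrite sqrtC_eq0; apply/eqP => /dot_eq0 /eqP; rewrite (negbTE a0).
rewrite geC0_conj ?invr_ge0 // -{1}(sqrtCK (dot a a)) -/r.
have -> : r ^+ 2 * (r^-1 * r^-1) = 1 by field.
by rewrite scale1r.
Qed.

Lemma sepl_separable (P : 'M[C]_(2 * 2)) : sepl P -> separable P.
Proof.
move=> [s ->].
pose x0 := (0 : 'cV[C]_2, 0 : 'cV[C]_2).
exists (size s), (fun i => dot (nth x0 s i).1 (nth x0 s i).1 *
                          dot (nth x0 s i).2 (nth x0 s i).2),
  (fun i => nrmz (nth x0 s i).1), (fun i => nrmz (nth x0 s i).2).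
split; first by move=> i; rewrite mulr_ge0 ?dot_ge0.
split; first by move=> i; apply: nrmz_unit.
split; first by move=> i; apply: nrmz_unit.
rewrite (big_nth x0) big_mkord; apply: eq_bigr => i _.
by rewrite {1}ketbra_nrmz {1}(ketbra_nrmz (nth x0 s i).2) kronZl kronZr scalerA.
Qed.

Inductive sepI m n : 'M[C]_(m * n) -> Prop :=
| sepI0 : sepI 0
| sepIadd A B : sepI A -> sepI B -> sepI (A + B)
| sepI1 (a : 'cV[C]_m) (b : 'cV[C]_n) : sepI (kron (ketbra a) (ketbra b)).

Lemma sepI_sepl m n (P : 'M[C]_(m * n)) : sepI P -> sepl P.
Proof.
elim => [|A B _ [s1 ->] _ [s2 ->]|a b].
- by exists [::]; rewrite big_nil.
- by exists (s1 ++ s2); rewrite big_cat.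
- by exists [:: (a, b)]; rewrite big_seq1.
Qed.

Lemma sepI_sum m n I (r : seq I) (P : pred I) (F : I -> 'M[C]_(m * n)) :
  (forall i, P i -> sepI (F i)) -> sepI (\sum_(i <- r | P i) F i).
Proof.
move=> h; apply: (big_ind (@sepI m n)) => //; first exact: sepI0.
exact: sepIadd.
Qed.

End Sep.


Section Locc.
Variable C : numClosedFieldType.

Lemma conjA_sum m1 m2 n (K : 'M[C]_(m1, m2)) :
  adj (kron K (1%:M : 'M[C]_n)) *m kron K 1%:M = kron (adj K *m K) 1%:M.
Proof. by rewrite kron_adj dag1 kron_mul mulmx1. Qed.

Lemma conjB_sum m1 m2 n (K : 'M[C]_(m1, m2)) :
  adj (kron (1%:M : 'M[C]_n) K) *m kron 1%:M K = kron 1%:M (adj K *m K).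
Proof. by rewrite kron_adj dag1 kron_mul mulmx1. Qed.

Lemma LOCC_sum1 da db (p : LOCC C da db) :
  LOCC_wf p -> LOCC_effect false p + LOCC_effect true p = 1%:M.
Proof.
elim: p => {da db} [da db o|da db k d K next IH|da db k d K next IH] /=.
- by case: o => _; rewrite /= ?addr0 ?add0r.
- move=> [hw hn]; rewrite -big_split /=.
  under eq_bigr => j _ do rewrite -mulmxDl -mulmxDr IH // mulmx1 conjA_sum.
  by rewrite -kron_suml hw kron11.
- move=> [hw hn]; rewrite -big_split /=.
  under eq_bigr => j _ do rewrite -mulmxDl -mulmxDr IH // mulmx1 conjB_sum.
  by rewrite -kron_sumr hw kron11.
Qed.

Lemma one_ketbra n : (1%:M : 'M[C]_n) = \sum_(i < n) ketbra (delta_mx i 0).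
Proof.
apply/matrixP => i j; rewrite summxE (bigD1 i) //= big1 ?addr0.
  rewrite /ketbra [RHS]mxE big_ord1 dagE !mxE !eqxx eq_sym.
  by case: (j == i); rewrite /= ?rmorph1 ?rmorph0 ?mulr1 ?mulr0 ?mul1r.
move=> k nk; rewrite /ketbra mxE big_ord1 dagE !mxE.
by rewrite eq_sym (negbTE nk) mul0r.
Qed.

Lemma sepI_one m n : sepI (1%:M : 'M[C]_(m * n)).
Proof.
rewrite -kron11 (one_ketbra m) kron_suml; apply: sepI_sum => i _.
rewrite (one_ketbra n) kron_sumr; apply: sepI_sum => j _.
exact: sepI1.
Qed.

Lemma sepI_conjA m1 m2 n (K : 'M[C]_(m1, m2)) (E : 'M[C]_(m1 * n)) :
  sepI E -> sepI (adj (kron K (1%:M : 'M[C]_n)) *m E *m kron K 1%:M).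
Proof.
elim => [|A B _ hA _ hB|a b].
- by rewrite mulmx0 mul0mx; apply: sepI0.
- by rewrite mulmxDr mulmxDl; apply: sepIadd.
- rewrite kron_adj dag1 !kron_mul mul1mx mulmx1.
  have -> : adj K *m ketbra a *m K = ketbra (adj K *m a).
    by rewrite /ketbra dagM dagK !mulmxA.
  exact: sepI1.
Qed.

Lemma sepI_conjB m1 m2 n (K : 'M[C]_(m1, m2)) (E : 'M[C]_(n * m1)) :
  sepI E -> sepI (adj (kron (1%:M : 'M[C]_n) K) *m E *m kron 1%:M K).
Proof.
elim => [|A B _ hA _ hB|a b].
- by rewrite mulmx0 mul0mx; apply: sepI0.
- by rewrite mulmxDr mulmxDl; apply: sepIadd.
- rewrite kron_adj dag1 !kron_mul mul1mx mulmx1.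
  have -> : adj K *m ketbra b *m K = ketbra (adj K *m b).
    by rewrite /ketbra dagM dagK !mulmxA.
  exact: sepI1.
Qed.

Lemma LOCC_sepI o da db (p : LOCC C da db) : sepI (LOCC_effect o p).
Proof.
elim: p => {da db} [da db o'|da db k d K next IH|da db k d K next IH] /=.
- by case: eqP => _; [apply: sepI_one | apply: sepI0].
- by apply: sepI_sum => j _; apply: sepI_conjA.
- by apply: sepI_sum => j _; apply: sepI_conjB.
Qed.

End Locc.


Section Supp.
Variable C : numClosedFieldType.

Lemma sub_tr_ex n (A B : 'M[C]_n) : (A^T <= B^T)%MS -> exists X, A = B *m X.
Proof.
move=> /mulmxKpV h; exists (A^T *m pinvmx B^T)^T.
by rewrite -{1}[B]trmxK -trmx_mul h trmxK.
Qed.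

Lemma supp_col n (P rho : 'M[C]_n) : supp_proj P rho ->
  (exists X, P = rho *m X) /\ (exists Y, rho = P *m Y).
Proof.
move=> [_ [_ /andP [h1 h2]]]; split; exact: sub_tr_ex.
Qed.

Lemma supp_fix n (P rho : 'M[C]_n) : supp_proj P rho -> P *m rho = rho.
Proof.
move=> hP; have [_ [Y ->]] := supp_col hP.
by case: hP => [_ [hPP _]]; rewrite mulmxA hPP.
Qed.

Lemma supp_left n (P rho : 'M[C]_n) : supp_proj P rho -> adj rho = rho ->
  exists X, P = X *m rho.
Proof.
move=> hP hr; have [[X hX] _] := supp_col hP.
exists (adj X); case: hP => [hadj _].
by rewrite -hadj hX dagM hr.
Qed.

Lemma supp_orth n (P1 P2 rho1 rho2 : 'M[C]_n) :
  supp_proj P1 rho1 -> supp_proj P2 rho2 -> orth_supports rho1 rho2 ->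
  P1 *m P2 = 0.
Proof.
move=> h1 h2 ho; have [[X1 e1] _] := supp_col h1.
have [[X2 e2] _] := supp_col h2.
case: h1 => [ha _].
rewrite -ha e1 e2 dagM -mulmxA (mulmxA (adj rho1)) ho.
by rewrite mul0mx mulmx0.
Qed.

Lemma supp_rank n (P rho : 'M[C]_n) : supp_proj P rho -> \rank P = \rank rho.
Proof.
by move=> [_ [_ h]]; rewrite -mxrank_tr (eqmx_rank h) mxrank_tr.
Qed.

Lemma proj_sum1 n (P1 P2 : 'M[C]_n) :
  adj P1 = P1 -> adj P2 = P2 -> P1 *m P1 = P1 -> P2 *m P2 = P2 ->
  P1 *m P2 = 0 -> (\rank P1 + \rank P2 = n)%N -> P1 + P2 = 1%:M.
Proof.
move=> a1 a2 i1 i2 o12 hr.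
have o21 : P2 *m P1 = 0 by rewrite -a1 -a2 -dagM o12 dag0.
set Q := P1 + P2.
have QQ : Q *m Q = Q by rewrite /Q mulmxDl !mulmxDr o12 o21 i1 i2 addr0 add0r.
have QP1 : Q *m P1 = P1 by rewrite /Q mulmxDl o21 i1 addr0.
have QP2 : Q *m P2 = P2 by rewrite /Q mulmxDl o12 i2 add0r.
have cap : (P1^T :&: P2^T)%MS = 0.
  set W := (P1^T :&: P2^T)%MS.
  have /mulmxKpV w1 : (W <= P1^T)%MS by apply: capmxSl.
  have /mulmxKpV w2 : (W <= P2^T)%MS by apply: capmxSr.
  have e1 : W *m P1^T = W.
    by rewrite -{1}w1 -mulmxA -trmx_mul i1 w1.
  by rewrite -e1 -w2 -mulmxA -trmx_mul o12 trmx0 mulmx0.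
have hrk := mxrank_disjoint_sum cap.
have sub : (P1^T + P2^T <= Q^T)%MS.
  rewrite addsmx_sub; apply/andP; split.
    by rewrite -{1}QP1 trmx_mul submxMl.
  by rewrite -{1}QP2 trmx_mul submxMl.
have : row_full Q^T.
  rewrite /row_full eqn_leq rank_leq_col /=.
  by rewrite -{1}hr -!(mxrank_tr P1) -!(mxrank_tr P2) -hrk mxrankS.
rewrite row_full_unit unitmx_tr => hu.
by rewrite -[Q](mulKmx hu) QQ mulVmx.
Qed.

Lemma dag_tstar n (A : 'M[C]_n) : adj A = map_mx Num.conj (A^T).
Proof. by apply/matrixP => i j; rewrite dagE !mxE. Qed.

Lemma supp_exists n (rho : 'M[C]_n) : adj rho = rho -> exists P, supp_proj P rho.
Proof.
move=> hr.
have hn : rho \is normalmx by apply/normalmxP; rewrite -dag_tstar hr.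
move/orthomx_spectralP: hn.
set U := spectralmx rho; set d := spectral_diag rho => hrho.
have hU : U *m adj U = 1%:M.
  by rewrite dag_tstar; apply/unitarymxP/spectral_unitarymx.
have hiU : invmx U = adj U.
  by rewrite dag_tstar invmx_unitary // spectral_unitarymx.
rewrite hiU in hrho.
pose d' : 'rV[C]_n := \row_i ((d 0 i != 0)%:R).
pose dp : 'rV[C]_n := \row_i ((d 0 i)^-1).
pose P := adj U *m diag_mx d' *m U.
have e1 : diag_mx d' *m diag_mx d = diag_mx d.
  rewrite mulmx_diag; congr diag_mx; apply/rowP => i; rewrite !mxE.
  by case: eqP => [->|_]; rewrite ?mulr0 ?mul1r.
have e2 : diag_mx d *m diag_mx dp = diag_mx d'.
  rewrite mulmx_diag; congr diag_mx; apply/rowP => i; rewrite !mxE.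
  by case: eqP => [->|/eqP h]; rewrite ?mul0r ?divff.
have e3 : diag_mx d' *m diag_mx d' = diag_mx d'.
  rewrite mulmx_diag; congr diag_mx; apply/rowP => i; rewrite !mxE.
  by case: (_ != _); rewrite ?mulr0 ?mulr1.
have e4 : adj (diag_mx d') = diag_mx d'.
  apply/matrixP => i j; rewrite dagE !mxE; case: (eqVneq i j) => [->|nij].
    by rewrite !mulr1n; case: (_ != _); rewrite ?rmorph1 ?rmorph0.
  have nji : (j == i) = false by rewrite eq_sym (negbTE nij).
  by rewrite ?(negbTE nij) ?nji !mulr0n rmorph0.
exists P; split; [|split].
- by rewrite /P !dagM dagK e4 mulmxA.
- rewrite /P -!mulmxA (mulmxA U) hU mul1mx (mulmxA (diag_mx d')) e3.
  by rewrite !mulmxA.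
- apply/andP; split.
  + apply/submxP; exists (adj U *m diag_mx dp *m U)^T.
    rewrite -trmx_mul; congr trmx.
    rewrite hrho /P -!mulmxA (mulmxA U) hU mul1mx !mulmxA.
    by rewrite -(mulmxA _ (diag_mx d)) e2.
  + apply/submxP; exists rho^T; rewrite -trmx_mul; congr trmx.
    rewrite {2}hrho /P -!mulmxA (mulmxA U) hU mul1mx !mulmxA.
    have -> : adj U *m diag_mx d' *m diag_mx d *m U = adj U *m (diag_mx d' *m diag_mx d) *m U by rewrite !mulmxA.
    by rewrite e1 -hrho.
Qed.

End Supp.


Section AC.
Variable C : numClosedFieldType.

Definition kv m n (a : 'cV[C]_m) (b : 'cV[C]_n) : 'cV[C]_(m * n) := kron a b.

Lemma kron_ketbra m n (a : 'cV[C]_m) (b : 'cV[C]_n) :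
  kron (ketbra a) (ketbra b) = ketbra (kv a b).
Proof.
have e : adj (kv a b) = kron (adj a) (adj b) :> 'M_(1, m * n).
  exact: (kron_adj a b).
rewrite /ketbra e; exact: (esym (kron_mul a b (adj a) (adj b))).
Qed.

Lemma tr_ketbra n (w : 'cV[C]_n) (rho : 'M[C]_n) :
  \tr (ketbra w *m rho) = form rho w w.
Proof. by rewrite /ketbra -mulmxA mxtrace_mulC trace_mx11. Qed.

Lemma sepl_kill (rho P : 'M[C]_(2 * 2)) : psd rho -> sepl P ->
  \tr (P *m rho) = 0 -> rho *m P = 0.
Proof.
move=> [hr hpos] [s ->]; elim: s => [|x s IH]; first by rewrite big_nil mulmx0.
rewrite !big_cons mulmxDl mxtraceD mulmxDr kron_ketbra tr_ketbra => h.
have h1 : 0 <= form rho (kv x.1 x.2) (kv x.1 x.2) by apply: hpos.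
have h2 : 0 <= \tr ((\sum_(j <- s) kron (ketbra j.1) (ketbra j.2)) *m rho).
  elim: (s) => [|y t IHt]; first by rewrite big_nil mul0mx mxtrace0.
  rewrite big_cons mulmxDl mxtraceD kron_ketbra tr_ketbra addr_ge0 //.
  exact: hpos.
move/eqP: h; rewrite paddr_eq0 // => /andP [/eqP e1 /eqP e2].
rewrite IH // addr0 /ketbra mulmxA (psd_kernel hr hpos e1) mul0mx //.
Qed.

Lemma sep_psd_sepl (P : 'M[C]_(2 * 2)) : separable P -> sepl P.
Proof. exact: separable_sepl. Qed.

Lemma povm_eq_supp (rho1 rho2 Pi1 Pi2 P1 P2 : 'M[C]_(2 * 2)) :
  density rho1 -> density rho2 -> separable_POVM Pi1 Pi2 ->
  perfectly_distinguishes Pi1 Pi2 rho1 rho2 ->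
  supp_proj P1 rho1 -> supp_proj P2 rho2 -> P1 + P2 = 1%:M ->
  Pi1 = P1 /\ Pi2 = P2.
Proof.
move=> [d1 _] [d2 _] [s1 [s2 hs]] [_ [t12 [t21 _]]] h1 h2 hsum.
have k1 : rho2 *m Pi1 = 0 by apply: sepl_kill => //; apply: separable_sepl.
have k2 : rho1 *m Pi2 = 0 by apply: sepl_kill => //; apply: separable_sepl.
have [X1 e1] := supp_left h1 d1.1.
have [X2 e2] := supp_left h2 d2.1.
have z2 : P2 *m Pi1 = 0 by rewrite e2 -mulmxA k1 mulmx0.
have z1 : P1 *m Pi2 = 0 by rewrite e1 -mulmxA k2 mulmx0.
have ePi2 : Pi2 = 1%:M - Pi1 by rewrite -hs addrC addKr.
have eq1 : Pi1 = P1.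
  have : (P1 + P2) *m Pi1 = Pi1 by rewrite hsum mul1mx.
  rewrite mulmxDl z2 addr0 => <-.
  move: z1; rewrite ePi2 mulmxBr mulmx1 => /eqP; rewrite subr_eq0 => /eqP <-.
  by [].
split => //; rewrite ePi2 eq1 -hsum addrC addKr //.
Qed.

Lemma supp_distinguish (rho1 rho2 P1 P2 : 'M[C]_(2 * 2)) :
  density rho1 -> density rho2 ->
  supp_proj P1 rho1 -> supp_proj P2 rho2 -> P1 + P2 = 1%:M ->
  perfectly_distinguishes P1 P2 rho1 rho2.
Proof.
move=> [_ t1] [_ t2] h1 h2 hsum.
have i1 : P1 *m P1 = P1 by case: h1 => [_ []].
have i2 : P2 *m P2 = P2 by case: h2 => [_ []].
have e2 : P2 = 1%:M - P1 by rewrite -hsum addrC addKr.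
have o12 : P1 *m P2 = 0 by rewrite e2 mulmxBr mulmx1 i1 subrr.
have o21 : P2 *m P1 = 0 by rewrite e2 mulmxBl mul1mx i1 subrr.
split; first by rewrite (supp_fix h1).
split; first by rewrite -(supp_fix h2) mulmxA o12 mul0mx mxtrace0.
split; first by rewrite -(supp_fix h1) mulmxA o21 mul0mx mxtrace0.
by rewrite (supp_fix h2).
Qed.

End AC.


Section C2.
Variable C : numClosedFieldType.
Implicit Types a b u v w x : 'cV[C]_2.

Definition perp a : 'cV[C]_2 :=
  (- (a 1 0)^*) *: delta_mx 0 0 + (a 0 0)^* *: delta_mx 1 0.

Lemma perp0 a : perp a 0 0 = - (a 1 0)^*.
Proof. by rewrite !mxE /= mulr1 mulr0 addr0. Qed.
Lemma perp1 a : perp a 1 0 = (a 0 0)^*.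
Proof. by rewrite !mxE /= mulr1 mulr0 add0r. Qed.

Lemma dot2 u v : dot u v = (u 0 0)^* * v 0 0 + (u 1 0)^* * v 1 0.
Proof.
rewrite dotE big_ord_recl big_ord1.
by have -> : lift ord0 ord0 = 1 :> 'I_2 by apply: val_inj.
Qed.

Lemma col2_eq u v : u 0 0 = v 0 0 -> u 1 0 = v 1 0 -> u = v.
Proof.
move=> h0 h1; apply/matrixP => i j; rewrite (ord1 j).
by case: i => [[|[|//]]] hi; [move: h0 | move: h1]; congr (_ = _); congr (_ _ _);
  apply: val_inj.
Qed.

Lemma mat2_eq (A B : 'M[C]_2) : A 0 0 = B 0 0 -> A 0 1 = B 0 1 ->
  A 1 0 = B 1 0 -> A 1 1 = B 1 1 -> A = B.
Proof.
move=> h00 h01 h10 h11; apply/matrixP => i j.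
have e0 : forall (hk : (0 < 2)%N), Ordinal hk = 0 by move=> hk; apply: val_inj.
have e1 : forall (hk : (1 < 2)%N), Ordinal hk = 1 by move=> hk; apply: val_inj.
by case: i => [[|[|//]]] hi; case: j => [[|[|//]]] hj;
  rewrite ?e0 ?e1.
Qed.

Lemma dot_perp a v : dot (perp a) v = a 0 0 * v 1 0 - a 1 0 * v 0 0.
Proof. by rewrite dot2 perp0 perp1 rmorphN /= !conjCK; ring. Qed.

Lemma decomp a v : dot a a *: v = dot a v *: a + dot (perp a) v *: perp a.
Proof.
rewrite dot_perp !dot2; apply: col2_eq; rewrite !mxE ?perp0 ?perp1 /=; ring.
Qed.

Lemma dot_a_perp a : dot a (perp a) = 0.
Proof. by rewrite dot2 perp0 perp1; ring. Qed.

Lemma dot_perp_perp a : dot (perp a) (perp a) = dot a a.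
Proof. by rewrite dot_perp perp0 perp1 dot2; ring. Qed.

Lemma dot_neq0 n (a : 'cV[C]_n) : a != 0 -> dot a a != 0.
Proof. by move=> a0; apply/eqP => /dot_eq0 /eqP; rewrite (negbTE a0). Qed.

Lemma dot_real n (a : 'cV[C]_n) : (dot a a)^* = dot a a.
Proof. by rewrite geC0_conj // dot_ge0. Qed.

Lemma perp_neq0 a : a != 0 -> perp a != 0.
Proof.
move=> a0; apply/eqP => h; move: (dot_neq0 a0).
by rewrite -dot_perp_perp h /dot dag0 mul0mx mxE eqxx.
Qed.

Lemma orth2 x v w : x != 0 -> dot x v = 0 -> dot x w = 0 ->
  dot (perp v) w = 0.
Proof.
move=> x0; rewrite dot_perp !dot2 => h1 h2.
have [h|h] := eqVneq (x 0 0) 0.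
- have x1 : x 1 0 != 0.
    apply: contra x0 => /eqP e; apply/eqP/col2_eq; by rewrite ?h ?e mxE.
  rewrite h rmorph0 !mul0r !add0r in h1 h2.
  have : (x 1 0)^* * (v 0 0 * w 1 0 - v 1 0 * w 0 0) = 0.
    have -> : (x 1 0)^* * (v 0 0 * w 1 0 - v 1 0 * w 0 0) =
      v 0 0 * ((x 1 0)^* * w 1 0) - w 0 0 * ((x 1 0)^* * v 1 0) by ring.
    by rewrite h1 h2 !mulr0 subrr.
  by move/eqP; rewrite mulf_eq0 conjC_eq0 (negbTE x1) => /eqP.
- have : (x 0 0)^* * (v 0 0 * w 1 0 - v 1 0 * w 0 0) = 0.
    have -> : (x 0 0)^* * (v 0 0 * w 1 0 - v 1 0 * w 0 0) =
      w 1 0 * ((x 0 0)^* * v 0 0 + (x 1 0)^* * v 1 0)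
      - v 1 0 * ((x 0 0)^* * w 0 0 + (x 1 0)^* * w 1 0) by ring.
    by rewrite h1 h2 !mulr0 subrr.
  by move/eqP; rewrite mulf_eq0 conjC_eq0 (negbTE h) => /eqP.
Qed.

Lemma ketbra_sum a : ketbra a + ketbra (perp a) = dot a a *: 1%:M.
Proof.
rewrite dot2; apply: mat2_eq; rewrite /ketbra !mxE !big_ord1 !dagE ?(ord1 ord0) ?perp0 ?perp1 /=;
  rewrite ?rmorphN /= ?conjCK; ring.
Qed.

End C2.


Section Forms.
Variable C : numClosedFieldType.

Definition proj n (E : 'M[C]_n) := adj E = E /\ E *m E = E.

Definition Aform (P : 'M[C]_(2 * 2)) := exists E Q0 Q1 : 'M[C]_2,
  [/\ proj E, proj Q0, proj Q1 & P = kron E Q0 + kron (1%:M - E) Q1].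
Definition Bform (P : 'M[C]_(2 * 2)) := exists E Q0 Q1 : 'M[C]_2,
  [/\ proj E, proj Q0, proj Q1 & P = kron Q0 E + kron Q1 (1%:M - E)].

Lemma proj_compl n (E : 'M[C]_n) : proj E -> proj (1%:M - E).
Proof.
move=> [h1 h2]; split; first by rewrite dagB dag1 h1.
by rewrite mulmxBl !mulmxBr !mul1mx ?mulmx1 h2 subrr subr0.
Qed.

Lemma proj0 n : proj (0 : 'M[C]_n).
Proof. by split; [rewrite dag0 | rewrite mulmx0]. Qed.

Lemma nz_entry m n (E : 'M[C]_(m, n)) : E != 0 -> exists i j, E i j != 0.
Proof.
move=> E0.
case: (boolP [exists i, exists j, E i j != 0]) => [/existsP [i /existsP [j h]]|/existsPn h].
  by exists i, j.
exfalso; move/negP: E0; apply; apply/eqP/matrixP => i j; rewrite mxE.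
by move/existsPn: (h i) => /(_ j); rewrite negbK => /eqP.
Qed.

Lemma kron_injl (E X : 'M[C]_2) : E != 0 -> kron E X = 0 -> X = 0.
Proof.
move=> /nz_entry [i [j h]] hk; apply/matrixP => k l.
move/matrixP: hk => /(_ (mxvec_index i k) (mxvec_index j l)).
by rewrite kronE !mxE => /eqP; rewrite mulf_eq0 (negbTE h) /= => /eqP.
Qed.

Lemma kron_injr (E X : 'M[C]_2) : E != 0 -> kron X E = 0 -> X = 0.
Proof.
move=> /nz_entry [i [j h]] hk; apply/matrixP => k l.
move/matrixP: hk => /(_ (mxvec_index k i) (mxvec_index l j)).
by rewrite kronE !mxE => /eqP; rewrite mulf_eq0 (negbTE h) orbF => /eqP.
Qed.

Lemma compA (E F S0 S1 : 'M[C]_2) (P : 'M[C]_(2 * 2)) :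
  proj E -> E != 0 -> proj P -> E *m F = 0 -> F *m E = 0 ->
  P = kron E S0 + kron F S1 -> proj S0.
Proof.
move=> [aE iE] E0 [aP iP] EF FE hP.
have h1 : P *m kron E 1%:M = kron E S0.
  by rewrite hP mulmxDl !kron_mul iE FE !mulmx1 kron0l addr0.
have h2 : kron E 1%:M *m P = kron E S0.
  by rewrite hP mulmxDr !kron_mul iE EF !mul1mx kron0l addr0.
split.
  apply/eqP; rewrite -subr_eq0; apply/eqP; apply: (kron_injl E0).
  rewrite kronBr -{1}aE -kron_adj -h1 dagM aP kron_adj aE dag1 h2 h1 subrr //.
have hh : kron E S0 *m kron E S0 = kron E S0.
  by rewrite -{1}h2 -h1 -mulmxA (mulmxA P) iP mulmxA h2 h1 kron_mul iE mulmx1.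
apply/eqP; rewrite -subr_eq0; apply/eqP; apply: (kron_injl E0).
by rewrite kronBr -{1}iE -kron_mul hh subrr.
Qed.

Lemma compB (E F S0 S1 : 'M[C]_2) (P : 'M[C]_(2 * 2)) :
  proj E -> E != 0 -> proj P -> E *m F = 0 -> F *m E = 0 ->
  P = kron S0 E + kron S1 F -> proj S0.
Proof.
move=> [aE iE] E0 [aP iP] EF FE hP.
have h1 : P *m kron 1%:M E = kron S0 E.
  by rewrite hP mulmxDl !kron_mul iE FE !mulmx1 kron0r addr0.
have h2 : kron 1%:M E *m P = kron S0 E.
  by rewrite hP mulmxDr !kron_mul iE EF !mul1mx kron0r addr0.
split.
  apply/eqP; rewrite -subr_eq0; apply/eqP; apply: (kron_injr E0).
  rewrite kronBl -{1}aE -kron_adj -h1 dagM aP kron_adj aE dag1 h2 h1 subrr //.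
have hh : kron S0 E *m kron S0 E = kron S0 E.
  by rewrite -{1}h2 -h1 -mulmxA (mulmxA P) iP mulmxA h2 h1 kron_mul iE mulmx1.
apply/eqP; rewrite -subr_eq0; apply/eqP; apply: (kron_injr E0).
by rewrite kronBl -{1}iE -kron_mul hh subrr.
Qed.

Lemma Aform_gen (E S0 S1 : 'M[C]_2) (P : 'M[C]_(2 * 2)) :
  proj E -> E != 0 -> 1%:M - E != 0 -> proj P ->
  P = kron E S0 + kron (1%:M - E) S1 -> Aform P.
Proof.
move=> pE E0 E1 pP hP.
have [aE iE] := pE.
have EF : E *m (1%:M - E) = 0 by rewrite mulmxBr mulmx1 iE subrr.
have FE : (1%:M - E) *m E = 0 by rewrite mulmxBl mul1mx iE subrr.
exists E, S0, S1; split.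
- exact: pE.
- exact: (compA pE E0 pP EF FE hP).
- apply: (compA (proj_compl pE) E1 pP FE EF); by rewrite hP [RHS]addrC.
- exact: hP.
Qed.

Lemma Bform_gen (E S0 S1 : 'M[C]_2) (P : 'M[C]_(2 * 2)) :
  proj E -> E != 0 -> 1%:M - E != 0 -> proj P ->
  P = kron S0 E + kron S1 (1%:M - E) -> Bform P.
Proof.
move=> pE E0 E1 pP hP.
have [aE iE] := pE.
have EF : E *m (1%:M - E) = 0 by rewrite mulmxBr mulmx1 iE subrr.
have FE : (1%:M - E) *m E = 0 by rewrite mulmxBl mul1mx iE subrr.
exists E, S0, S1; split.
- exact: pE.
- exact: (compB pE E0 pP EF FE hP).
- apply: (compB (proj_compl pE) E1 pP FE EF); by rewrite hP [RHS]addrC.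
- exact: hP.
Qed.

Lemma tr_ketbra1 n (e : 'cV[C]_n) : \tr (ketbra e) = dot e e.
Proof. by rewrite /ketbra mxtrace_mulC trace_mx11. Qed.

Lemma ketbra_mul n (u v : 'cV[C]_n) :
  ketbra u *m ketbra v = dot u v *: (u *m adj v).
Proof.
rewrite /ketbra -mulmxA (mulmxA (adj u)) [adj u *m v]mx11_scalar'.
by rewrite mul_scalar_mx -scalemxAr.
Qed.

Lemma vec_proj (e : 'cV[C]_2) : e != 0 ->
  let E := (dot e e)^-1 *: ketbra e in
  [/\ proj E, E != 0, 1%:M - E != 0 &
      1%:M - E = (dot e e)^-1 *: ketbra (perp e)].
Proof.
move=> e0 E; have ne := dot_neq0 e0.
have hc : ((dot e e)^-1)^* = (dot e e)^-1 by rewrite geC0_conj ?invr_ge0 ?dot_ge0.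
have trE : \tr E = 1 by rewrite mxtraceZ tr_ketbra1 mulVf.
split.
- split; first by rewrite /E dagZ dag_ketbra hc.
  rewrite /E -scalemxAl -scalemxAr ketbra_mul scalerA /ketbra.
  by rewrite scalerA -mulrA mulVf // mulr1.
- by apply/eqP => h; move: trE; rewrite h mxtrace0 => /eqP; rewrite eq_sym oner_eq0.
- apply/eqP => h.
  have hE : E = 1%:M by apply/eqP; rewrite eq_sym -subr_eq0 h.
  by move: trE; rewrite hE mxtrace1 => /eqP; rewrite pnatr_eq1.
- have := ketbra_sum e; move/(congr1 (fun X => (dot e e)^-1 *: X)).
  rewrite scalerDr scalerA mulVf // scale1r => h.
  by rewrite /E -h addrC addKr.
Qed.

Lemma Aform_vec (e : 'cV[C]_2) (R0 R1 : 'M[C]_2) (P : 'M[C]_(2 * 2)) :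
  e != 0 -> proj P ->
  P = kron (ketbra e) R0 + kron (ketbra (perp e)) R1 -> Aform P.
Proof.
move=> e0 pP hP; have [pE E0 E1 eF] := vec_proj e0.
set E := _ *: ketbra e in pE E0 E1 eF.
apply: (Aform_gen (S0 := dot e e *: R0) (S1 := dot e e *: R1) pE E0 E1 pP).
have ne := dot_neq0 e0.
rewrite eF /E !kronZl !kronZr !scalerA !mulVf // !scale1r //.
Qed.

Lemma Bform_vec (e : 'cV[C]_2) (R0 R1 : 'M[C]_2) (P : 'M[C]_(2 * 2)) :
  e != 0 -> proj P ->
  P = kron R0 (ketbra e) + kron R1 (ketbra (perp e)) -> Bform P.
Proof.
move=> e0 pP hP; have [pE E0 E1 eF] := vec_proj e0.
set E := _ *: ketbra e in pE E0 E1 eF.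
apply: (Bform_gen (S0 := dot e e *: R0) (S1 := dot e e *: R1) pE E0 E1 pP).
have ne := dot_neq0 e0.
rewrite eF /E !kronZl !kronZr !scalerA !mulfV // !scale1r //.
Qed.

Lemma Aform_compl (P : 'M[C]_(2 * 2)) : Aform P -> Aform (1%:M - P).
Proof.
move=> [E [Q0 [Q1 [pE p0 p1 ->]]]].
exists E, (1%:M - Q0), (1%:M - Q1).
split; [done|exact: proj_compl|exact: proj_compl|].
have h1 : (1%:M : 'M[C]_(2 * 2)) = kron E 1%:M + kron (1%:M - E) 1%:M.
  by rewrite -kronDl addrC subrK kron11.
by rewrite {1}h1 !kronBr opprD addrACA.
Qed.

Lemma Bform_compl (P : 'M[C]_(2 * 2)) : Bform P -> Bform (1%:M - P).
Proof.
move=> [E [Q0 [Q1 [pE p0 p1 ->]]]].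
exists E, (1%:M - Q0), (1%:M - Q1).
split; [done|exact: proj_compl|exact: proj_compl|].
have h1 : (1%:M : 'M[C]_(2 * 2)) = kron 1%:M E + kron 1%:M (1%:M - E).
  by rewrite -kronDr addrC subrK kron11.
by rewrite {1}h1 !kronBl opprD addrACA.
Qed.

End Forms.


Section Struct.
Variable C : numClosedFieldType.
Implicit Types a b u v w x : 'cV[C]_2.

Lemma dotZr n (u v : 'cV[C]_n) c : dot u (c *: v) = c * dot u v.
Proof. by rewrite /dot -scalemxAr mxE. Qed.

Lemma dotDr n (u v w : 'cV[C]_n) : dot u (v + w) = dot u v + dot u w.
Proof. by rewrite /dot mulmxDr mxE. Qed.

Lemma dot0r n (u : 'cV[C]_n) : dot u 0 = 0.
Proof. by rewrite /dot mulmx0 mxE. Qed.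

Lemma dot0l n (u : 'cV[C]_n) : dot 0 u = 0.
Proof. by rewrite /dot dag0 mul0mx mxE. Qed.

Lemma dotC0 n (u v : 'cV[C]_n) : dot u v = 0 -> dot v u = 0.
Proof. by move=> h; rewrite dotC h rmorph0. Qed.

Lemma ketbra0 n : ketbra (0 : 'cV[C]_n) = 0.
Proof. by rewrite /ketbra mul0mx. Qed.

Lemma scale_ketbra_inv n (v w : 'cV[C]_n) (c d : C) :
  c != 0 -> ketbra (c *: v) = ketbra (d *: w) ->
  exists k, ketbra v = k *: ketbra w.
Proof.
move=> c0; rewrite !ketbraZ => h.
have cc : c * c^* != 0 by rewrite mulf_neq0 ?conjC_eq0.
exists ((c * c^*)^-1 * (d * d^*)).
by rewrite -scalerA -h scalerA mulVf // scale1r.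
Qed.

Lemma par_ketbra a v : a != 0 -> dot (perp a) v = 0 ->
  exists c, ketbra v = c *: ketbra a.
Proof.
move=> a0 h; have := decomp a v; rewrite h scale0r addr0 => e.
apply: (@scale_ketbra_inv _ v a (dot a a) (dot a v) (dot_neq0 a0)).
by rewrite e.
Qed.

Lemma orth_ketbra a v : a != 0 -> dot a v = 0 ->
  exists c, ketbra v = c *: ketbra (perp a).
Proof.
move=> a0 h; have := decomp a v; rewrite h scale0r add0r => e.
apply: (@scale_ketbra_inv _ v (perp a) (dot a a) (dot (perp a) v) (dot_neq0 a0)).
by rewrite e.
Qed.

Lemma par_orth_zero a v x : a != 0 -> dot (perp a) v = 0 -> dot x v = 0 ->
  dot x a != 0 -> v = 0.
Proof.
move=> a0 h1 h2 h3; have := decomp a v; rewrite h1 scale0r addr0 => e.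
have : dot x (dot a a *: v) = dot x (dot a v *: a) by rewrite e.
rewrite !dotZr h2 mulr0 => /esym/eqP; rewrite mulf_eq0 (negbTE h3) orbF.
move/eqP => hav; move: e; rewrite hav scale0r => /eqP.
by rewrite scaler_eq0 (negbTE (dot_neq0 a0)) => /eqP.
Qed.

Lemma psum_seq (I : eqType) (s : seq I) (F : I -> C) :
  (forall i, i \in s -> 0 <= F i) -> \sum_(i <- s) F i = 0 ->
  forall i, i \in s -> F i = 0.
Proof.
elim: s => [//|y s IH] hpos; rewrite big_cons => h x.
have hy : 0 <= F y by apply: hpos; rewrite mem_head.
have hs : 0 <= \sum_(x <- s) F x.
  by rewrite big_seq sumr_ge0 // => z hz; apply: hpos; rewrite in_cons hz orbT.
move/eqP: h; rewrite paddr_eq0 // => /andP [/eqP h1 /eqP h2].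
rewrite in_cons => /orP [/eqP -> //|hx].
by apply: IH => // z hz; apply: hpos; rewrite in_cons hz orbT.
Qed.

Definition T m n (x : 'cV[C]_m * 'cV[C]_n) := kron (ketbra x.1) (ketbra x.2).

Lemma tr_ketbra_mul n (u v : 'cV[C]_n) :
  \tr (ketbra u *m ketbra v) = dot u v * (dot u v)^*.
Proof.
by rewrite ketbra_mul mxtraceZ mxtrace_mulC trace_mx11; congr (_ * _); exact: (dotC u v).
Qed.

Lemma cross_orth (P1 P2 : 'M[C]_(2 * 2)) s1 s2 :
  P1 = \sum_(i <- s1) T i -> P2 = \sum_(j <- s2) T j -> P1 *m P2 = 0 ->
  forall i j, i \in s1 -> j \in s2 -> dot i.1 j.1 = 0 \/ dot i.2 j.2 = 0.
Proof.
move=> e1 e2 o i j hi hj.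
pose g (i j : 'cV[C]_2 * 'cV[C]_2) :=
  (dot i.1 j.1 * dot i.2 j.2) * (dot i.1 j.1 * dot i.2 j.2)^*.
have htr0 : \tr (P1 *m P2) = \sum_(i <- s1) \sum_(j <- s2) g i j.
  rewrite e1 e2 mulmx_suml raddf_sum.
  apply: eq_bigr => i' _; rewrite mulmx_sumr raddf_sum.
  apply: eq_bigr => j' _; rewrite /T kron_mul /= mxtrace_kron !tr_ketbra_mul.
  by rewrite /g !rmorphM /=; ring.
have htr : \sum_(i <- s1) \sum_(j <- s2) g i j = 0 by rewrite -htr0 o mxtrace0.
have gpos : forall i j, 0 <= g i j by move=> ? ?; apply: mul_conjC_ge0.
have := psum_seq (fun i' _ => sumr_ge0 _ (fun j' _ => gpos i' j')) htr hi.
move=> /(psum_seq (fun j' _ => gpos i j')) /(_ j hj) /eqP.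
rewrite /g mul_conjC_eq0 mulf_eq0 => /orP [/eqP h|/eqP h]; by [left|right].
Qed.

End Struct.


Section Struct2.
Variable C : numClosedFieldType.
Notation V2 := ('cV[C]_2 * 'cV[C]_2)%type.

Lemma sum_kron2A (K0 K1 : 'M[C]_2) (s : seq V2) :
  (forall i, i \in s -> exists R0 R1, T i = kron K0 R0 + kron K1 R1) ->
  exists R0 R1, \sum_(i <- s) T i = kron K0 R0 + kron K1 R1.
Proof.
elim: s => [|j s IH] h.
  by exists 0, 0; rewrite big_nil !kron0r addr0.
have [R0 [R1 e]] := h j (mem_head _ _).
have [S0 [S1 e']] : exists S0 S1, \sum_(i <- s) T i = kron K0 S0 + kron K1 S1.
  by apply: IH => i hi; apply: h; rewrite in_cons hi orbT.
exists (R0 + S0), (R1 + S1); rewrite big_cons e e' !kronDr.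
by rewrite addrACA.
Qed.

Lemma sum_kron2B (K0 K1 : 'M[C]_2) (s : seq V2) :
  (forall i, i \in s -> exists R0 R1, T i = kron R0 K0 + kron R1 K1) ->
  exists R0 R1, \sum_(i <- s) T i = kron R0 K0 + kron R1 K1.
Proof.
elim: s => [|j s IH] h.
  by exists 0, 0; rewrite big_nil !kron0l addr0.
have [R0 [R1 e]] := h j (mem_head _ _).
have [S0 [S1 e']] : exists S0 S1, \sum_(i <- s) T i = kron S0 K0 + kron S1 K1.
  by apply: IH => i hi; apply: h; rewrite in_cons hi orbT.
exists (R0 + S0), (R1 + S1); rewrite big_cons e e' !kronDl.
by rewrite addrACA.
Qed.

Lemma sum_W (W1 W2 : 'M[C]_(2 * 2)) (s : seq V2) :
  (forall i, i \in s -> exists al be, T i = al *: W1 + be *: W2) ->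
  exists al be, \sum_(i <- s) T i = al *: W1 + be *: W2.
Proof.
elim: s => [|j s IH] h.
  by exists 0, 0; rewrite big_nil !scale0r addr0.
have [R0 [R1 e]] := h j (mem_head _ _).
have [S0 [S1 e']] : exists S0 S1, \sum_(i <- s) T i = S0 *: W1 + S1 *: W2.
  by apply: IH => i hi; apply: h; rewrite in_cons hi orbT.
exists (R0 + S0), (R1 + S1); rewrite big_cons e e' !scalerDl.
by rewrite addrACA.
Qed.

Lemma outer_mul (p a : 'cV[C]_2) :
  (p *m adj a) *m adj (p *m adj a) = dot a a *: ketbra p.
Proof.
rewrite dagM dagK mulmxA -(mulmxA p) [adj a *m a]mx11_scalar'.
by rewrite mul_mx_scalar -scalemxAl.
Qed.

Lemma dot_conj_neq0 n (u v : 'cV[C]_n) : dot u v != 0 -> dot v u != 0.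
Proof. by rewrite dotC conjC_eq0. Qed.

End Struct2.


Section Struct3.
Variable C : numClosedFieldType.

Lemma structure (P1 P2 : 'M[C]_(2 * 2)) :
  proj P1 -> proj P2 -> P1 + P2 = 1%:M -> sepl P1 -> sepl P2 ->
  Aform P1 \/ Bform P1.
Proof.
move=> pP1 pP2 hsum [s1 e1] [s2 e2].
have eP1 : P1 = 1%:M - P2 by rewrite -hsum addrK.
have o12 : P1 *m P2 = 0 by rewrite eP1 mulmxBl mul1mx pP2.2 subrr.
have cross := cross_orth e1 e2 o12.
case: (boolP (all (fun i => (i.1 == 0) || (i.2 == 0)) s1)) =>
  [/allP hz|/allPn [[a b] hx0]].
  left; have -> : P1 = 0.
    rewrite e1 big_seq big1 // => i /hz /orP [/eqP ->|/eqP ->];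
      by rewrite ketbra0 ?kron0l ?kron0r.
  exists 1%:M, 0, 0; split; [split; [exact: dag1|exact: mulmx1]
    |exact: proj0|exact: proj0|].
  by rewrite !kron0r addr0.
rewrite negb_or /= => /andP [a0 b0].
have hc0 : forall j, j \in s2 -> dot a j.1 = 0 \/ dot b j.2 = 0.
  by move=> j hj; exact: (cross (a, b) j hx0 hj).
case: (boolP (all (fun j => (j.2 == 0) || (dot a j.1 == 0)) s2)) =>
  [/allP hA|/allPn [[x1 y1] hy]].
  left; rewrite eP1; apply: Aform_compl.
  have [R0 [R1 eR]] :
      exists R0 R1, P2 = kron (ketbra a) R0 + kron (ketbra (perp a)) R1.
    rewrite e2; apply: sum_kron2A => -[u v] hj.
    case/orP: (hA _ hj) => /= [/eqP ->|/eqP h].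
      by exists 0, 0; rewrite /T ketbra0 !kron0r addr0.
    have [c hc] := orth_ketbra a0 h.
    exists 0, (c *: ketbra v); rewrite kron0r add0r /T hc kronZl kronZr //.
  exact: (Aform_vec a0 pP2 eR).
rewrite negb_or /= => /andP [y10 hay].
case: (boolP (all (fun j => (j.1 == 0) || (dot b j.2 == 0)) s2)) =>
  [/allP hB|/allPn [[x2 y2] hz]].
  right; rewrite eP1; apply: Bform_compl.
  have [R0 [R1 eR]] :
      exists R0 R1, P2 = kron R0 (ketbra b) + kron R1 (ketbra (perp b)).
    rewrite e2; apply: sum_kron2B => -[u v] hj.
    case/orP: (hB _ hj) => /= [/eqP ->|/eqP h].
      by exists 0, 0; rewrite /T ketbra0 !kron0l addr0.
    have [c hc] := orth_ketbra b0 h.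
    exists 0, (c *: ketbra u); rewrite kron0l add0r /T hc kronZl kronZr //.
  exact: (Bform_vec b0 pP2 eR).
rewrite negb_or /= => /andP [x20 hbz].
have hby1 : dot b y1 = 0.
  by case: (hc0 _ hy) => //= h; move: hay; rewrite h eqxx.
have hax2 : dot a x2 = 0.
  by case: (hc0 _ hz) => //= h; move: hbz; rewrite h eqxx.
have x10 : x1 != 0 by apply/eqP => e; move: hay; rewrite e dot0r eqxx.
have y20 : y2 != 0 by apply/eqP => e; move: hbz; rewrite e dot0r eqxx.
pose p := perp x1; pose q := perp y2.
pose W1 := kron (ketbra a) (ketbra b).
pose W2 := kron (ketbra p) (ketbra q).
have hterm : forall i, i \in s1 -> exists al be, T i = al *: W1 + be *: W2.
  move=> [u v] hi.
  case: (eqVneq u 0) => [->|u0].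
    by exists 0, 0; rewrite /T ketbra0 kron0l !scale0r addr0.
  case: (eqVneq v 0) => [->|v0].
    by exists 0, 0; rewrite /T ketbra0 kron0r !scale0r addr0.
  have := cross (u, v) (x1, y1) hi hy; have := cross (u, v) (x2, y2) hi hz.
  rewrite /= => cz cy.
  case: cy => h1; case: cz => h2.
  - exfalso; move/eqP: u0; apply.
    have hpa : dot (perp a) u = 0 by apply: (orth2 x20); apply: dotC0.
    apply: (par_orth_zero a0 hpa (dotC0 h1)).
    exact: dot_conj_neq0.
  - have [c hc] := orth_ketbra x10 (dotC0 h1).
    have [c' hc'] := orth_ketbra y20 (dotC0 h2).
    exists 0, (c * c'); rewrite /T hc hc' kronZl kronZr scalerA scale0r add0r.
    by rewrite mulrC.
  - have hpb : dot (perp b) v = 0 by apply: (orth2 y10); apply: dotC0.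
    have hpa : dot (perp a) u = 0 by apply: (orth2 x20); apply: dotC0.
    have [c hc] := par_ketbra a0 hpa.
    have [c' hc'] := par_ketbra b0 hpb.
    exists (c * c'), 0; rewrite /T hc hc' kronZl kronZr scalerA scale0r addr0.
    by rewrite mulrC.
  - exfalso; move/eqP: v0; apply.
    have hpb : dot (perp b) v = 0 by apply: (orth2 y10); apply: dotC0.
    apply: (par_orth_zero b0 hpb (dotC0 h2)).
    exact: dot_conj_neq0.
have [al [be eP]] := sum_W hterm.
rewrite -e1 in eP.
have AW1 : forall c, P1 = c *: W1 -> Aform P1.
  move=> c hc; apply: (Aform_vec (R0 := c *: ketbra b) (R1 := 0) a0 pP1).
  by rewrite kron0r addr0 kronZr.
have P2W1 : P2 *m W1 = 0.
  rewrite e2 mulmx_suml big_seq big1 // => -[u v] hj.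
  rewrite /T /W1 kron_mul !ketbra_mul.
  case: (hc0 _ hj) => /= h; rewrite (dotC0 h) scale0r ?kron0l ?kron0r //.
have P1W1 : P1 *m W1 = W1 by rewrite eP1 mulmxBl mul1mx P2W1 subr0.
have W1W1 : W1 *m W1 = (dot a a * dot b b) *: W1.
  by rewrite /W1 kron_mul !ketbra_mul kronZl kronZr scalerA.
pose Z := kron (p *m adj a) (q *m adj b).
have W2W1 : W2 *m W1 = (dot p a * dot q b) *: Z.
  by rewrite /W2 /W1 kron_mul !ketbra_mul kronZl kronZr scalerA.
have star : W1 = (al * (dot a a * dot b b)) *: W1 + (be * (dot p a * dot q b)) *: Z.
  by rewrite -{1}P1W1 eP mulmxDl -!scalemxAl W1W1 W2W1 !scalerA.
case: (eqVneq be 0) => [be0|ben0].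
  by left; apply: (AW1 al); rewrite eP be0 scale0r addr0.
case: (eqVneq (dot p a) 0) => [pa0|pan0].
  left; have [c hc] := orth_ketbra a0 (dotC0 pa0).
  apply: (Aform_vec (R0 := al *: ketbra b) (R1 := (be * c) *: ketbra q) a0 pP1).
  by rewrite eP /W1 /W2 hc kronZl !kronZr scalerA.
case: (eqVneq (dot q b) 0) => [qb0|qbn0].
  right; have [c hc] := orth_ketbra b0 (dotC0 qb0).
  apply: (Bform_vec (R0 := al *: ketbra a) (R1 := (be * c) *: ketbra p) b0 pP1).
  by rewrite eP /W1 /W2 hc kronZr !kronZl scalerA.
pose g := be * (dot p a * dot q b).
have g0 : g != 0 by rewrite /g !mulf_neq0.
pose mu := g^-1 * (1 - al * (dot a a * dot b b)).
have hZ : Z = mu *: W1.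
  have e : g *: Z = (1 - al * (dot a a * dot b b)) *: W1.
    by rewrite scalerBl scale1r {1}star addrC addKr.
  by rewrite /mu -scalerA -e scalerA mulVf // scale1r.
have ZZ : Z *m adj Z = (dot a a * dot b b) *: W2.
  by rewrite /Z kron_adj kron_mul !outer_mul kronZl kronZr scalerA.
have W1adj : adj W1 = W1 by rewrite /W1 kron_adj !dag_ketbra.
have nab : dot a a * dot b b != 0 by rewrite mulf_neq0 ?dot_neq0.
have W2eq : W2 = (mu * mu^*) *: W1.
  have : (dot a a * dot b b) *: W2 = (dot a a * dot b b) *: ((mu * mu^*) *: W1).
    rewrite -ZZ hZ dagZ W1adj -scalemxAl -scalemxAr W1W1 !scalerA.
    by congr (_ *: _); ring.
  move/(congr1 (fun X => (dot a a * dot b b)^-1 *: X)).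
  by rewrite !scalerA mulVf // scale1r mul1r.
left; apply: (AW1 (al + be * (mu * mu^*))).
by rewrite eP W2eq scalerA -scalerDl.
Qed.

End Struct3.


Section Proto.
Variable C : numClosedFieldType.

Definition pick2 (A B : 'M[C]_2) (j : 'I_2) : 'M[C]_2 := if j == 0 then A else B.

Definition bobQ (Q : 'M[C]_2) : LOCC C 2 2 :=
  @BobStep C 2 2 2 (fun _ => 2%N) (pick2 Q (1%:M - Q))
    (fun j => Leaf C 2 2 (j != 0)).
Definition aliceQ (Q : 'M[C]_2) : LOCC C 2 2 :=
  @AliceStep C 2 2 2 (fun _ => 2%N) (pick2 Q (1%:M - Q))
    (fun j => Leaf C 2 2 (j != 0)).

Definition protoA (E Q0 Q1 : 'M[C]_2) : LOCC C 2 2 :=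
  @AliceStep C 2 2 2 (fun _ => 2%N) (pick2 E (1%:M - E))
    (fun j => if j == 0 then bobQ Q0 else bobQ Q1).
Definition protoB (E Q0 Q1 : 'M[C]_2) : LOCC C 2 2 :=
  @BobStep C 2 2 2 (fun _ => 2%N) (pick2 E (1%:M - E))
    (fun j => if j == 0 then aliceQ Q0 else aliceQ Q1).

Lemma sum2 (F : 'I_2 -> 'M[C]_(2 * 2)) : \sum_(j < 2) F j = F 0 + F 1.
Proof.
rewrite big_ord_recl big_ord1; congr (_ + _); congr F; exact: val_inj.
Qed.

Lemma proj_sum2 (Q : 'M[C]_2) : proj Q ->
  \sum_(j < 2) adj (pick2 Q (1%:M - Q) j) *m pick2 Q (1%:M - Q) j = 1%:M.
Proof.
move=> pQ; have [a1 i1] := pQ; have [a2 i2] := proj_compl pQ.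
rewrite big_ord_recl big_ord1 /pick2 /= a1 i1.
by rewrite a2 i2 addrC subrK.
Qed.

Lemma bobQ_wf Q : proj Q -> LOCC_wf (bobQ Q).
Proof. by move=> pQ; split => //; apply: proj_sum2. Qed.

Lemma aliceQ_wf Q : proj Q -> LOCC_wf (aliceQ Q).
Proof. by move=> pQ; split => //; apply: proj_sum2. Qed.

Lemma protoA_wf E Q0 Q1 : proj E -> proj Q0 -> proj Q1 -> LOCC_wf (protoA E Q0 Q1).
Proof.
move=> pE p0 p1; split; first exact: proj_sum2.
by move=> j; case: (j == 0); [apply: bobQ_wf | apply: bobQ_wf].
Qed.

Lemma protoB_wf E Q0 Q1 : proj E -> proj Q0 -> proj Q1 -> LOCC_wf (protoB E Q0 Q1).
Proof.
move=> pE p0 p1; split; first exact: proj_sum2.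
by move=> j; case: (j == 0); [apply: aliceQ_wf | apply: aliceQ_wf].
Qed.

Lemma bobQ_eff Q : proj Q -> LOCC_effect false (bobQ Q) = kron 1%:M Q.
Proof.
move=> [a1 i1] /=.
rewrite big_ord_recl big_ord1 /pick2 /=.
rewrite /= mulmx0 mul0mx addr0 mulmx1 kron_adj dag1 kron_mul mulmx1 a1 i1 //.
Qed.

Lemma aliceQ_eff Q : proj Q -> LOCC_effect false (aliceQ Q) = kron Q 1%:M.
Proof.
move=> [a1 i1] /=.
rewrite big_ord_recl big_ord1 /pick2 /=.
rewrite /= mulmx0 mul0mx addr0 mulmx1 kron_adj dag1 kron_mul mulmx1 a1 i1 //.
Qed.

Lemma protoA_eff E Q0 Q1 : proj E -> proj Q0 -> proj Q1 ->
  LOCC_effect false (protoA E Q0 Q1) = kron E Q0 + kron (1%:M - E) Q1.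
Proof.
move=> pE p0 p1; have [a1 i1] := pE; have [a2 i2] := proj_compl pE.
move: (bobQ_eff p0) (bobQ_eff p1) => /= e0 e1.
rewrite /= big_ord_recl big_ord1 /pick2 /= e0 e1.
rewrite !kron_adj !dag1 !kron_mul !mul1mx !mulmx1 a1 i1 a2 i2 //.
Qed.

Lemma protoB_eff E Q0 Q1 : proj E -> proj Q0 -> proj Q1 ->
  LOCC_effect false (protoB E Q0 Q1) = kron Q0 E + kron Q1 (1%:M - E).
Proof.
move=> pE p0 p1; have [a1 i1] := pE; have [a2 i2] := proj_compl pE.
move: (aliceQ_eff p0) (aliceQ_eff p1) => /= e0 e1.
rewrite /= big_ord_recl big_ord1 /pick2 /= e0 e1.
rewrite !kron_adj !dag1 !kron_mul !mul1mx !mulmx1 a1 i1 a2 i2 //.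
Qed.

Lemma form_LOCC (P : 'M[C]_(2 * 2)) : Aform P \/ Bform P ->
  exists p : LOCC C 2 2, LOCC_wf p /\ LOCC_effect false p = P.
Proof.
case=> [[E [Q0 [Q1 [pE p0 p1 ->]]]]|[E [Q0 [Q1 [pE p0 p1 ->]]]]].
  by exists (protoA E Q0 Q1); split; [apply: protoA_wf|apply: protoA_eff].
by exists (protoB E Q0 Q1); split; [apply: protoB_wf|apply: protoB_eff].
Qed.

End Proto.

Unset Implicit Arguments.


Theorem mainTheorem2 (C : numClosedFieldType) (rho1 rho2 : 'M[C]_(2 * 2)) :
  density rho1 -> density rho2 ->
  \rank rho1 = 2%N -> \rank rho2 = 2%N ->
  orth_supports rho1 rho2 ->
  [/\ ((exists Pi1 Pi2 : 'M[C]_(2 * 2),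
          separable_POVM Pi1 Pi2 /\ perfectly_distinguishes Pi1 Pi2 rho1 rho2)
       <-> (exists p : LOCC C 2 2,
          LOCC_wf p /\
          perfectly_distinguishes (LOCC_effect false p) (LOCC_effect true p)
                                  rho1 rho2)),
      ((exists p : LOCC C 2 2,
          LOCC_wf p /\
          perfectly_distinguishes (LOCC_effect false p) (LOCC_effect true p)
                                  rho1 rho2)
       <-> (forall P1 P2 : 'M[C]_(2 * 2),
              supp_proj P1 rho1 -> supp_proj P2 rho2 ->
              separable P1 /\ separable P2))
    & ((forall P1 P2 : 'M[C]_(2 * 2),
              supp_proj P1 rho1 -> supp_proj P2 rho2 ->
              separable P1 /\ separable P2)
       <-> (exists Pi1 Pi2 : 'M[C]_(2 * 2),
          separable_POVM Pi1 Pi2 /\ perfectly_distinguishes Pi1 Pi2 rho1 rho2))].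
Proof.
move=> hd1 hd2 hr1 hr2 ho.
have sum1 : forall P1 P2 : 'M[C]_(2 * 2),
    supp_proj P1 rho1 -> supp_proj P2 rho2 -> P1 + P2 = 1%:M.
  move=> P1 P2 h1 h2.
  have [a1 [i1 _]] := h1; have [a2 [i2 _]] := h2.
  apply: proj_sum1 => //; first exact: (supp_orth h1 h2 ho).
  by rewrite (supp_rank h1) (supp_rank h2) hr1 hr2.
have [P1 h1] := supp_exists hd1.1.1.
have [P2 h2] := supp_exists hd2.1.1.
set A := exists Pi1 Pi2 : 'M[C]_(2 * 2),
          separable_POVM Pi1 Pi2 /\ perfectly_distinguishes Pi1 Pi2 rho1 rho2.
set B := exists p : LOCC C 2 2,
          LOCC_wf p /\
          perfectly_distinguishes (LOCC_effect false p) (LOCC_effect true p)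
                                  rho1 rho2.
set Cc := forall P1 P2 : 'M[C]_(2 * 2),
              supp_proj P1 rho1 -> supp_proj P2 rho2 ->
              separable P1 /\ separable P2.
have AC : A -> Cc.
  move=> [Pi1 [Pi2 [hs hpd]]] Q1 Q2 g1 g2.
  have [e1 e2] := povm_eq_supp hd1 hd2 hs hpd g1 g2 (sum1 _ _ g1 g2).
  by case: hs => [s1 [s2 _]]; rewrite -e1 -e2.
have CA : Cc -> A.
  move=> hc; have [s1 s2] := hc _ _ h1 h2.
  exists P1, P2; split; first by split; [|split] => //; apply: sum1.
  by apply: supp_distinguish => //; apply: sum1.
have BA : B -> A.
  move=> [p [hw hpd]]; exists (LOCC_effect false p), (LOCC_effect true p).
  split => //; split; [|split].
  - by apply: sepl_separable; apply: sepI_sepl; apply: LOCC_sepI.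
  - by apply: sepl_separable; apply: sepI_sepl; apply: LOCC_sepI.
  - exact: LOCC_sum1.
have CB : Cc -> B.
  move=> hc; have [s1 s2] := hc _ _ h1 h2.
  have hs := sum1 _ _ h1 h2.
  have pP1 : proj P1 by case: h1 => [a [i _]].
  have pP2 : proj P2 by case: h2 => [a [i _]].
  have [p [hw he]] := form_LOCC (structure pP1 pP2 hs (separable_sepl s1)
                                           (separable_sepl s2)).
  exists p; split => //.
  have het : LOCC_effect true p = P2.
    by have := LOCC_sum1 hw; rewrite he -hs => /addrI.
  rewrite he het; exact: supp_distinguish.
split; split.
- by move=> a; apply: CB; apply: AC.
- exact: BA.
- by move=> b; apply: AC; apply: BA.
- exact: CB.
- exact: CA.
- exact: AC.
Qed.
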